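(* Let $A=[1,1,\dots,1]\in\mathbb R^{1\times N}$, $\vec w\in\mathbb R^N$ with $\sum_{i=1}^N w_i>0$, $b=A\vec w$, and let $\vec x$ be the minimizer of $\frac12\|\vec x-\vec w\|_2^2$ over $\vec x\in\mathbb R^N$ subject to $A\vec x=b$ and $x_i\ge0$ for all $i$. Assume at least one entry of $\vec w$ is strictly less than $0$. Then for every index $i$ with $w_i\le0$ we have $x_i=0$. *)

(* Defs.v *)
From HB Require Import structures.
From mathcomp Require Import all_boot all_order all_algebra.
From mathcomp Require Import reals.
Set Implicit Arguments. Unset Strict Implicit. Unset Printing Implicit Defensive.
Import Order.TTheory GRing.Theory Num.Theory.
Local Open Scope ring_scope.

Definition onesA (R : realType) (N : nat) : 'M[R]_(1, N) := const_mx 1.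

Definition proj_obj (R : realType) (N : nat) (x w : 'cV[R]_N) : R :=
  2^-1 * \sum_(i < N) (x i 0 - w i 0) ^+ 2.

Definition feasible (R : realType) (N : nat) (b : 'M[R]_1) (x : 'cV[R]_N) : Prop :=
  onesA R N *m x = b /\ forall i : 'I_N, 0 <= x i 0.

Definition is_minimizer (R : realType) (N : nat) (w : 'cV[R]_N) (b : 'M[R]_1)
  (x : 'cV[R]_N) : Prop :=
  feasible b x /\ forall y : 'cV[R]_N, feasible b y -> proj_obj x w <= proj_obj y w.

(* Main.v *)
Require Import Defs.
From HB Require Import structures.
From mathcomp Require Import all_boot all_order all_algebra.
From mathcomp Require Import reals.
From mathcomp Require Import lra.
Import Order.TTheory GRing.Theory Num.Theory.
Local Open Scope ring_scope.

Lemma sum2 (R : realType) (N : nat) (f : 'I_N -> R) (i k : 'I_N) : k != i ->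
  \sum_j f j = f i + f k + \sum_(j | (j != i) && (j != k)) f j.
Proof.
move=> hki; rewrite (bigD1 i) //= (bigD1 k) //= addrA.
by apply: congr1; apply: eq_bigl => j; rewrite andbC.
Qed.

Lemma onesE (R : realType) (N : nat) (v : 'cV[R]_N) :
  (onesA R N *m v) 0 0 = \sum_j v j 0.
Proof. by rewrite mxE; apply: eq_bigr => j _; rewrite /onesA mxE mul1r. Qed.

Theorem lemma2 (R : realType) (N : nat) (w x : 'cV[R]_N)
  (hsum : 0 < \sum_(i < N) w i 0)
  (hmin : is_minimizer w (onesA R N *m w) x)
  (hneg : exists i : 'I_N, w i 0 < 0) :
  forall i : 'I_N, w i 0 <= 0 -> x i 0 = 0.
Proof.
move=> i hwi.
case: hmin => [[hA hpos] hopt].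
have hs : \sum_j x j 0 = \sum_j w j 0 by rewrite -!onesE hA.
case: hneg => j hj.
have [k hk] : exists k, x k 0 < w k 0.
  case: (pickP (fun k => x k 0 < w k 0)) => [k hk|hn]; first by exists k.
  exfalso.
  have : \sum_j0 (x j0 0 - w j0 0) > 0.
    rewrite (bigD1 j) //=; apply: ltr_pwDl.
      by have := hpos j; lra.
    apply: sumr_ge0 => l _; have := hn l => /= /negbT; rewrite -leNgt; lra.
  by rewrite sumrB hs subrr ltxx.
have hki : k != i.
  apply/eqP => eki; rewrite eki in hk; have := hpos i; lra.
have hxi := hpos i.
case: (eqVneq (x i 0) 0) => // hne.
have hxi' : 0 < x i 0 by rewrite lt_def hne.
pose y : 'cV[R]_N := \col_l (if l == i then 0 else if l == k then x k 0 + x i 0 else x l 0).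
have yi : y i 0 = 0 by rewrite mxE eqxx.
have yk : y k 0 = x k 0 + x i 0 by rewrite mxE (negbTE hki) eqxx.
have yo : forall l, (l != i) && (l != k) -> y l 0 = x l 0.
  by move=> l /andP[/negbTE h1 /negbTE h2]; rewrite mxE h1 h2.
have fy : feasible (onesA R N *m w) y.
  split.
    rewrite -hA; apply/matrixP => a b; rewrite !ord1 !onesE.
    rewrite (@sum2 _ _ _ _ _ hki) (@sum2 _ _ (fun l => x l 0) _ _ hki) yi yk.
    rewrite (eq_bigr (fun l => x l 0)); first by rewrite add0r [x i 0 + _]addrC.
    exact: yo.
  move=> l; rewrite mxE; case: ifP => _ //; case: ifP => _ //.
  by apply: addr_ge0.
have := hopt y fy; rewrite /proj_obj.
rewrite (@sum2 _ _ (fun l => (y l 0 - w l 0) ^+ 2) _ _ hki) (@sum2 _ _ (fun l => (x l 0 - w l 0) ^+ 2) _ _ hki).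
have -> : \sum_(l | (l != i) && (l != k)) (y l 0 - w l 0) ^+ 2 =
  \sum_(l | (l != i) && (l != k)) (x l 0 - w l 0) ^+ 2.
  by apply: eq_bigr => l hl; rewrite (yo l hl).
rewrite yi yk.
set S := \sum_(l | _) _.
nra.
Qed.
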